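(* Let $(R,\mathfrak m)$ be a one-dimensional Cohen–Macaulay local ring admitting a canonical module $\omega_R$ with $R\subseteq\omega_R\subseteq\overline{R}$, let $B=\mathfrak m:\mathfrak m$ with Jacobson radical $J(B)$, and assume $\mathfrak m^2\subseteq R:\omega_R$. Let $I$ be an ideal of $B$ contained in $J(B)$. The following are equivalent: (1) for every minimal system of generators $\{x_1,\dots,x_n\}$ of $\mathfrak m$ for which $R:\omega_R=(x_1,\dots,x_r)^2+(x_{r+1},\dots,x_n)$ (for some $0\le r\le n$), there is no $x\in I$ such that $x_j=x\,x_i$ for some $i,j\in\{1,\dots,r\}$; (2) $I\subseteq (R:\omega_R):\mathfrak m$.
   Context: $Q(R)$ is the total ring of fractions and $\overline R$ the integral closure of $R$ in $Q(R)$; for fractional ideals $I,J$, $I:J=\{r\in Q(R)\mid rJ\subseteq I\}$. *)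

(* Defs.v *)
(* A commutative ring R is modelled as a subring of its
   total ring of fractions Q; all fractional ideals / submodules are
   subsets of Q (predicates Q -> Prop). *)
From mathcomp Require Import all_boot all_algebra.
Set Implicit Arguments. Unset Strict Implicit. Unset Printing Implicit Defensive.
Import GRing.Theory.
Local Open Scope ring_scope.

Section Defs.
Variable Q : comUnitRingType.

Definition subS (A B : Q -> Prop) : Prop := forall x, A x -> B x.
Definition eqS (A B : Q -> Prop) : Prop := forall x, A x <-> B x.

Definition colon (I J : Q -> Prop) : Q -> Prop :=
  fun q => forall b, J b -> I (q * b).

Inductive span (R S : Q -> Prop) : Q -> Prop :=
| span_gen x : S x -> span R S x
| span_0 : span R S 0
| span_add x y : span R S x -> span R S y -> span R S (x + y)
| span_mul r x : R r -> span R S x -> span R S (r * x).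

Definition gen (R : Q -> Prop) (xs : seq Q) : Q -> Prop :=
  span R (fun z => z \in xs).

Definition sumS (R A B : Q -> Prop) : Q -> Prop :=
  span R (fun z => A z \/ B z).

Definition prodS (R A B : Q -> Prop) : Q -> Prop :=
  span R (fun z => exists a b, A a /\ B b /\ z = a * b).

Definition is_subring (R : Q -> Prop) : Prop :=
  [/\ R 0, R 1, (forall x y, R x -> R y -> R (x - y))
    & (forall x y, R x -> R y -> R (x * y))].

Definition is_ideal (A I : Q -> Prop) : Prop :=
  [/\ subS I A, I 0, (forall x y, I x -> I y -> I (x + y))
    & (forall a x, A a -> I x -> I (a * x))].

Definition is_prime_ideal (A P : Q -> Prop) : Prop :=
  [/\ is_ideal A P, ~ P 1
    & (forall x y, A x -> A y -> P (x * y) -> P x \/ P y)].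

Definition is_maximal_ideal (A M : Q -> Prop) : Prop :=
  [/\ is_ideal A M, ~ M 1
    & (forall N, is_ideal A N -> subS M N -> N 1 \/ subS N M)].

Definition jacobson (A : Q -> Prop) : Q -> Prop :=
  fun x => A x /\ forall M, is_maximal_ideal A M -> M x.

Definition nzd_in (A : Q -> Prop) (x : Q) : Prop :=
  A x /\ forall y, A y -> x * y = 0 -> y = 0.

Definition nzd (x : Q) : Prop := forall y, x * y = 0 -> y = 0.

Definition total_ring_of_fractions (R : Q -> Prop) : Prop :=
  (forall s, nzd_in R s -> s \is a GRing.unit) /\
  (forall q, exists a s, R a /\ nzd_in R s /\ q = a / s).

Definition noetherian (R : Q -> Prop) : Prop :=
  forall I, is_ideal R I -> exists xs, eqS I (gen R xs).

Definition nonunits (R : Q -> Prop) : Q -> Prop :=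
  fun x => R x /\ ~ (exists y, R y /\ x * y = 1).

(* local: the non-units form an ideal, which is then the maximal ideal *)
Definition local (R : Q -> Prop) : Prop :=
  forall x y, nonunits R x -> nonunits R y -> nonunits R (x + y).

(* Krull dimension exactly one (R local with maximal ideal m) *)
Definition krull_dim_one (R : Q -> Prop) : Prop :=
  (exists P, is_prime_ideal R P /\ subS P (nonunits R) /\
             ~ subS (nonunits R) P) /\
  (forall P1 P2 P3, is_prime_ideal R P1 -> is_prime_ideal R P2 ->
     is_prime_ideal R P3 -> subS P1 P2 -> subS P2 P3 ->
     eqS P1 P2 \/ eqS P2 P3).

(* one-dimensional Cohen-Macaulay: depth m >= 1, i.e. m has a nonzerodivisor *)
Definition cm_dim_one (R : Q -> Prop) : Prop :=
  krull_dim_one R /\ exists x, nonunits R x /\ nzd_in R x.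

Definition integral_closure (R : Q -> Prop) : Q -> Prop :=
  fun x => exists p : {poly Q},
    [/\ p \is monic, (forall i, R p`_i) & root p x].

Definition fractional_ideal (R I : Q -> Prop) : Prop :=
  (exists xs, eqS I (gen R xs)) /\ exists x, I x /\ nzd x.

(* canonical ideal (Herzog--Kunz): K : (K : I) = I for all fractional I *)
Definition canonical_ideal (R K : Q -> Prop) : Prop :=
  fractional_ideal R K /\
  forall I, fractional_ideal R I -> eqS (colon K (colon K I)) I.

Definition minimal_gens (R m : Q -> Prop) (xs : seq Q) : Prop :=
  eqS (gen R xs) m /\
  forall ys, eqS (gen R ys) m -> (size xs <= size ys)%N.

End Defs.

(* Main.v *)
Require Import Defs.
From mathcomp Require Import all_boot all_algebra.
From mathcomp Require Import boolp classical_sets.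
From Stdlib Require Import Classical.
From mathcomp Require Import ring zify.
Set Implicit Arguments. Unset Strict Implicit. Unset Printing Implicit Defensive.
Import GRing.Theory.
Local Open Scope ring_scope.

Section Basics.
Variable Q : comUnitRingType.
Variable R : Q -> Prop.
Hypothesis HR : is_subring R.

Lemma R0 : R 0. Proof. by case: HR. Qed.
Lemma R1 : R 1. Proof. by case: HR. Qed.
Lemma RB x y : R x -> R y -> R (x - y). Proof. by case: HR => _ _ H _; apply: H. Qed.
Lemma RM x y : R x -> R y -> R (x * y). Proof. by case: HR => _ _ _ H; apply: H. Qed.
Lemma RN x : R x -> R (- x). Proof. by move=> Hx; rewrite -sub0r; apply: RB => //; apply: R0. Qed.
Lemma RD x y : R x -> R y -> R (x + y).
Proof. by move=> Hx Hy; rewrite -[y]opprK; apply: RB => //; apply: RN. Qed.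

Lemma span_ind_sub (S T : Q -> Prop) :
  T 0 -> (forall x y, T x -> T y -> T (x + y)) ->
  (forall r x, R r -> T x -> T (r * x)) -> (forall x, S x -> T x) ->
  forall x, Defs.span R S x -> T x.
Proof. by move=> T0 TD TM ST x; elim=> //; auto. Qed.

Lemma span_mono (S T : Q -> Prop) : (forall x, S x -> T x) ->
  forall x, Defs.span R S x -> Defs.span R T x.
Proof.
move=> ST; apply: span_ind_sub; [exact: span_0|exact: span_add|exact: span_mul|].
by move=> x /ST; apply: span_gen.
Qed.

Lemma span_opp S x : Defs.span R S x -> Defs.span R S (- x).
Proof. by move=> H; rewrite -mulN1r; apply: span_mul => //; apply/RN/R1. Qed.

Lemma span_sub S x y : Defs.span R S x -> Defs.span R S y -> Defs.span R S (x - y).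
Proof. by move=> Hx Hy; apply: span_add => //; apply: span_opp. Qed.

Lemma gen_mem l z : z \in l -> gen R l z.
Proof. by move=> H; apply: span_gen. Qed.

Lemma gen_subl (l1 l2 : seq Q) : {subset l1 <= l2} -> forall q, gen R l1 q -> gen R l2 q.
Proof. by move=> H; apply: span_mono => z /H. Qed.

Lemma gen_nil q : gen R [::] q -> q = 0.
Proof.
apply: (span_ind_sub (T := fun q => q = 0)) => //.
- by move=> x y -> ->; rewrite addr0.
- by move=> r x _ ->; rewrite mulr0.
Qed.

Lemma gen_split (a b : seq Q) t q :
  gen R (a ++ t :: b) q <-> exists c u, [/\ R c, gen R (a ++ b) u & q = c * t + u].
Proof.
split.
- apply: (span_ind_sub (T := fun q => exists c u, [/\ R c, gen R (a ++ b) u & q = c * t + u])).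
  + by exists 0, 0; split; [exact: R0|exact: span_0|rewrite mul0r addr0].
  + move=> x y [c [u [Rc gu ->]]] [c' [u' [Rc' gu' ->]]].
    exists (c + c'), (u + u'); split; [exact: RD|exact: span_add|].
    by rewrite mulrDl; rewrite !addrA; congr (_ + _); rewrite -!addrA; congr (_ + _); rewrite addrC.
  + move=> r x Rr [c [u [Rc gu ->]]]; exists (r * c), (r * u); split; [exact: RM|exact: span_mul|].
    by rewrite mulrDr mulrA.
  + move=> z; rewrite mem_cat inE => /orP[za|/orP[/eqP ->|zb]].
    * exists 0, z; split; [exact: R0| |by rewrite mul0r add0r].
      by apply: gen_mem; rewrite mem_cat za.
    * by exists 1, 0; split; [exact: R1|exact: span_0|rewrite mul1r addr0].
    * exists 0, z; split; [exact: R0| |by rewrite mul0r add0r].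
      by apply: gen_mem; rewrite mem_cat zb orbT.
- move=> [c [u [Rc gu ->]]]; apply: span_add.
  + by apply: span_mul => //; apply: gen_mem; rewrite mem_cat inE eqxx orbT.
  + by apply: gen_subl gu => z; rewrite !mem_cat inE => /orP[->|->] //; rewrite !orbT.
Qed.

Lemma gen_cat (a b : seq Q) q : gen R (a ++ b) q ->
  exists q1 q2, [/\ gen R a q1, gen R b q2 & q = q1 + q2].
Proof.
apply: (span_ind_sub (T := fun q => exists q1 q2, [/\ gen R a q1, gen R b q2 & q = q1 + q2])).
- by exists 0, 0; split; [exact: span_0|exact: span_0|rewrite addr0].
- move=> x y [u [v [gu gv ->]]] [u' [v' [gu' gv' ->]]].
  exists (u + u'), (v + v'); split; [exact: span_add|exact: span_add|].
  by rewrite !addrA; congr (_ + _); rewrite -!addrA; congr (_ + _); rewrite addrC.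
- move=> r x Rr [u [v [gu gv ->]]]; exists (r * u), (r * v); split;
    [exact: span_mul|exact: span_mul|by rewrite mulrDr].
- move=> z; rewrite mem_cat => /orP[za|zb].
  + by exists z, 0; split; [exact: gen_mem|exact: span_0|rewrite addr0].
  + by exists 0, z; split; [exact: span_0|exact: gen_mem|rewrite add0r].
Qed.

Lemma gen_single t q : gen R [:: t] q -> exists c, R c /\ q = c * t.
Proof.
move/(@gen_split [::] [::] t q) => [c [u [Rc gu ->]]].
by exists c; split => //; rewrite (gen_nil gu) addr0.
Qed.

Definition unit_in (c : Q) := exists d, R d /\ c * d = 1.

Lemma m_or_unit c : R c -> nonunits R c \/ unit_in c.
Proof.
move=> Rc; case: (classic (unit_in c)) => H; [by right|left; split => //].
Qed.

Lemma m_R c : nonunits R c -> R c. Proof. by case. Qed.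

Lemma m_unit c : nonunits R c -> unit_in c -> False.
Proof. by move=> [_ H] [d [Rd cd]]; apply: H; exists d. Qed.

Lemma m_mul r x : R r -> nonunits R x -> nonunits R (r * x).
Proof.
move=> Rr [Rx H]; split; first exact: RM.
move=> [d [Rd e]]; apply: H; exists (r * d); split; first exact: RM.
by rewrite -e mulrCA mulrA.
Qed.

Lemma m_mulr r x : R r -> nonunits R x -> nonunits R (x * r).
Proof. by move=> Rr Hx; rewrite mulrC; apply: m_mul. Qed.

Lemma m_0 : nonunits R 0.
Proof.
split; first exact: R0. by move=> [d [_]]; rewrite mul0r => /eqP; rewrite eq_sym oner_eq0.
Qed.

Lemma m_opp x : nonunits R x -> nonunits R (- x).
Proof. by move=> H; rewrite -mulN1r; apply: m_mul => //; apply/RN/R1. Qed.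

Lemma unit_one : unit_in 1.
Proof. by exists 1; split; [exact: R1|rewrite mulr1]. Qed.

Hypothesis Hloc : local R.

Lemma m_add x y : nonunits R x -> nonunits R y -> nonunits R (x + y).
Proof. exact: Hloc. Qed.

Lemma m_sub x y : nonunits R x -> nonunits R y -> nonunits R (x - y).
Proof. by move=> Hx Hy; apply: m_add => //; apply: m_opp. Qed.

Lemma one_sub_unit c : nonunits R c -> unit_in (1 - c).
Proof.
move=> Hc; have Rc := m_R Hc.
case: (m_or_unit (RB R1 Rc)) => // H.
exfalso; apply: (m_unit _ unit_one).
by have := m_add H Hc; rewrite subrK.
Qed.

Lemma unit_cancel c t : unit_in c -> exists d, R d /\ t = d * (c * t).
Proof. by move=> [d [Rd e]]; exists d; split => //; rewrite mulrA (mulrC d) e mul1r. Qed.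

End Basics.

Lemma intR_inv (Q : comUnitRingType) (R : Q -> Prop) (HR : is_subring R) k w :
  R k -> k * w = 1 -> integral_closure R w -> R w.
Proof.
have RN := RN HR; have RM := RM HR; have R1 := R1 HR.
have RX x n : R x -> R (x ^+ n).
  by move=> Hx; elim: n => [|n IH]; rewrite ?expr0 // exprS; apply: RM.
move=> Rk kw [p [mp Rp rp]].
have sp : (0 < size p)%N by rewrite size_poly_gt0 monic_neq0.
move: rp; rewrite /root horner_coef => /eqP.
have lc : p`_(size p).-1 = 1 by move/monicP: mp.
case Es: (size p) sp lc => [|d] // _ lc.
rewrite big_ord_recr /= lc mul1r.
case: d Es lc => [|e] Es lc.
  by rewrite big_ord0 add0r expr0 => /eqP; rewrite oner_eq0.
move=> /(congr1 (fun z => z * k ^+ e)); rewrite mul0r mulrDl.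
have -> : w ^+ e.+1 * k ^+ e = w.
  by rewrite exprS -mulrA -exprMn (mulrC w k) kw expr1n mulr1.
rewrite mulr_suml.
have -> : \sum_(i < e.+1) p`_i * w ^+ i * k ^+ e = \sum_(i < e.+1) p`_i * k ^+ (e - i).
  apply: eq_bigr => i _; have hi : (i <= e)%N by rewrite -ltnS ltn_ord.
  have kk : k ^+ e = k ^+ (e - i) * k ^+ i by rewrite -exprD subnK.
  rewrite kk.
  have E : w ^+ i * (k ^+ (e - i) * k ^+ i) = k ^+ (e - i) * (k * w) ^+ i.
    by rewrite exprMn; ring.
  by rewrite -mulrA E kw expr1n mulr1.
move/eqP; rewrite addrC addr_eq0 => /eqP ->; apply: RN.
apply: (big_ind (fun z => R z)); [exact: R0 HR|exact: RD HR|].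
by move=> i _; apply: RM => //; apply: RX.
Qed.

Section Main.
Variable Q : comUnitRingType.
Variables R omega : Q -> Prop.
Hypothesis HR : is_subring R.
Hypothesis Hloc : local R.
Hypothesis Hcan : canonical_ideal R omega.
Hypothesis HRo : subS R omega.
Hypothesis Hoint : subS omega (integral_closure R).
Hypothesis Hmm : subS (prodS R (nonunits R) (nonunits R)) (colon R omega).

Local Notation m := (nonunits R).
Local Notation K := (colon R omega).
Local Notation B := (colon (nonunits R) (nonunits R)).

Lemma omega_mul r w : R r -> omega w -> omega (r * w).
Proof.
case: Hcan => [[[xs Hxs] _] _] Rr /Hxs ow; apply/Hxs.
exact: span_mul.
Qed.

Lemma K_R k : K k -> R k.
Proof. by move=> Hk; have := Hk 1 (HRo (R1 HR)); rewrite mulr1. Qed.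

Lemma K0 : K 0.
Proof. by move=> b _; rewrite mul0r; apply: R0 HR. Qed.

Lemma K_add k l : K k -> K l -> K (k + l).
Proof. by move=> Hk Hl b ob; rewrite mulrDl; apply: (RD HR); [apply: Hk|apply: Hl]. Qed.

Lemma K_mul r k : R r -> K k -> K (r * k).
Proof. by move=> Rr Hk b ob; rewrite -mulrA; apply: (RM HR) => //; apply: Hk. Qed.

Lemma K_opp k : K k -> K (- k).
Proof. by move=> Hk; rewrite -mulN1r; apply: K_mul => //; apply/(RN HR)/(R1 HR). Qed.

Lemma K_sub k l : K k -> K l -> K (k - l).
Proof. by move=> Hk Hl; apply: K_add => //; apply: K_opp. Qed.

Lemma mm_K a b : m a -> m b -> K (a * b).
Proof. by move=> ma mb; apply: Hmm; apply: span_gen; exists a, b. Qed.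

Lemma R_B r : R r -> B r.
Proof. by move=> Rr b mb; apply: m_mul. Qed.

Lemma B_mul x y : B x -> B y -> B (x * y).
Proof. by move=> Bx By b mb; rewrite -mulrA; apply: Bx; apply: By. Qed.

Lemma B_sub x y : B x -> B y -> B (x - y).
Proof.
by move=> Bx By b mb; rewrite mulrBl; apply: (m_sub HR Hloc); [apply: Bx|apply: By].
Qed.

Lemma m_B : forall b, m b -> B b.
Proof. by move=> b mb c mc; rewrite mulrC; apply: m_mul => //; apply: m_R mc. Qed.

Lemma B_R x : B x -> forall b, m b -> R (x * b).
Proof. by move=> Bx b mb; apply: m_R (Bx b mb). Qed.


Lemma gen_sub_gen (l1 l2 : seq Q) : (forall z, z \in l1 -> gen R l2 z) ->
  forall q, gen R l1 q -> gen R l2 q.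
Proof.
move=> H; apply: span_ind_sub; [exact: span_0|exact: span_add|exact: span_mul|exact: H].
Qed.

Lemma split_exch p s e : (forall z, z \in s -> m z) -> gen R (p ++ s) e ->
  (exists s1 t s2 c u, [/\ s = s1 ++ t :: s2, R c /\ unit_in R c,
       gen R (p ++ s1 ++ s2) u & e = c * t + u]) \/
  (exists u v, [/\ gen R p u, prodS R m m v & e = u + v]).
Proof.
elim: s e => [|t s IH] e Hs He.
- right; exists e, 0; split; [by rewrite cats0 in He|exact: span_0|by rewrite addr0].
- move/(gen_split HR): He => [c [u [Rc gu ->]]].
  case: (m_or_unit Rc) => [mc|uc]; last first.
    by left; exists [::], t, s, c, u; split.
  have Hs' : forall z, z \in s -> m z by move=> z zs; apply: Hs; rewrite inE zs orbT.
  case: (IH u Hs' gu) => [[s1 [t' [s2 [c' [u' [es uc' gu' eu]]]]]]|[u0 [v [gu0 pv eu]]]].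
  + left; exists (t :: s1), t', s2, c', (c * t + u'); split => //.
    * by rewrite es.
    * by apply/(gen_split HR); exists c, u'.
    * by rewrite eu addrCA.
  + right; exists u0, (c * t + v); split => //.
    * apply: span_add => //; apply: span_gen; exists c, t.
      by split => //; split => //; apply: Hs; rewrite inE eqxx.
    * by rewrite eu addrCA.
Qed.

Lemma exch_gen a b t c u e : R c -> unit_in R c -> gen R (a ++ b) u -> e = c * t + u ->
  forall q, gen R (e :: a ++ b) q <-> gen R (a ++ t :: b) q.
Proof.
move=> Rc uc gu ee q; split; apply: gen_sub_gen => z.
- rewrite inE => /orP[/eqP ->|zab].
  + by apply/(gen_split HR); exists c, u; split.
  + apply: gen_mem; move: zab; rewrite !mem_cat inE => /orP[->|->] //; by rewrite !orbT.
- rewrite mem_cat inE => /orP[za|/orP[/eqP ->|zb]].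
  + by apply: gen_mem; rewrite inE mem_cat za orbT.
  + have [d [Rd ->]] := unit_cancel t uc; apply: span_mul => //.
    have -> : c * t = e - u by rewrite ee addrK.
    apply: (span_sub HR); first by apply: gen_mem; rewrite inE eqxx.
    by apply: gen_subl gu => w wab; rewrite inE wab orbT.
  + by apply: gen_mem; rewrite inE mem_cat zb !orbT.
Qed.

Lemma B_add x y : B x -> B y -> B (x + y).
Proof. by move=> Bx By b mb; rewrite mulrDl; apply: (m_add Hloc); [apply: Bx|apply: By]. Qed.

Lemma max_ideal_exists a : B a -> ~ (exists u, B u /\ a * u = 1) ->
  exists M, is_maximal_ideal B M /\ M a.
Proof.
move=> Ba nu.
pose P := fun A : set Q => (forall q, ~ A q) \/ [/\ is_ideal B A, ~ A 1 & A a].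
have Hz : forall F : set (set Q), (F `<=` P)%classic -> total_on F subset ->
    P (\bigcup_(X in F) X)%classic.
  move=> F FP Ftot.
  case: (classic (exists q X, F X /\ X q)) => [[q0 [X0 [FX0 X0q]]]|hne]; last first.
    by left => q [X FX Xq]; apply: hne; exists q, X.
  have hP : forall X, F X -> forall q, X q -> [/\ is_ideal B X, ~ X 1 & X a].
    move=> X FX q Xq; case: (FP X FX) => // H; by case: (H q).
  right; split.
  - split.
    + move=> q [X FX Xq]; have [[sub _ _ _] _ _] := hP X FX q Xq; exact: sub.
    + exists X0 => //; have [[_ z _ _] _ _] := hP X0 FX0 q0 X0q; exact: z.
    + move=> q1 q2 [X FX Xq1] [Y FY Yq2]; case: (Ftot X Y FX FY) => [XY|YX].
      * exists Y => //; have [[_ _ add _] _ _] := hP Y FY q2 Yq2; apply: add => //.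
        exact: XY.
      * exists X => //; have [[_ _ add _] _ _] := hP X FX q1 Xq1; apply: add => //.
        exact: YX.
    + move=> b q Bb [X FX Xq]; exists X => //.
      have [[_ _ _ mul] _ _] := hP X FX q Xq; exact: mul.
  - by move=> [X FX X1]; have [_ n1 _] := hP X FX 1 X1.
  - by exists X0 => //; have [_ _ Xa] := hP X0 FX0 q0 X0q.
have [A [PA Amax]] := Zorn_bigcup Hz.
pose base := fun q => exists b, B b /\ q = a * b.
have Pbase : [/\ is_ideal B base, ~ base 1 & base a].
  split.
  - split.
    + by move=> q [b [Bb ->]]; apply: B_mul.
    + by exists 0; split; [apply: R_B; apply: R0 HR|rewrite mulr0].
    + move=> q1 q2 [b1 [Bb1 ->]] [b2 [Bb2 ->]]; exists (b1 + b2).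
      by split; [apply: B_add|rewrite mulrDr].
    + move=> c q Bc [b [Bb ->]]; exists (c * b); split; first exact: B_mul.
      by rewrite mulrCA.
  - by move=> [b [Bb e]]; apply: nu; exists b.
  - by exists 1; split; [apply: R_B; apply: R1 HR|rewrite mulr1].
case: PA => [Aempty|[Aid nA1 Aa]].
  exfalso; apply: (Amax base); last by right.
  split; first by move=> q /Aempty.
  by move=> H; apply: (Aempty 0); apply: H; exists 0; split; [apply: R_B; apply: R0 HR|rewrite mulr0].
exists A; split => //; split => // N Nid AN.
case: (classic (N 1)) => [|nN1]; [by left|right].
apply: NNPP => nNA; apply: (Amax N); first by split.
by right; split => //; apply: AN.
Qed.

Lemma unit_B x lam : jacobson B x -> R lam -> unit_in R lam ->
  exists u, B u /\ (x - lam) * u = 1.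
Proof.
move=> [Bx Jx] Rlam [d [Rd ld]]; apply: NNPP => nu.
have Bxl : B (x - lam) := B_sub Bx (R_B Rlam).
have [M [Mmax Mxl]] := max_ideal_exists Bxl nu.
have Mx := Jx M Mmax.
case: Mmax => [[Msub M0 Madd Mmul] M1 _].
have Mlam : M lam.
  have -> : lam = x + (-1) * (x - lam) by ring.
  apply: Madd => //; apply: Mmul => //; apply: R_B; apply/(RN HR)/(R1 HR).
by apply: M1; rewrite -ld mulrC; apply: Mmul => //; apply: R_B.
Qed.


Lemma gen_mem_eq (l1 l2 : seq Q) : (forall z, (z \in l1) = (z \in l2)) ->
  forall q, gen R l1 q <-> gen R l2 q.
Proof. by move=> H q; split; apply: gen_subl => z; rewrite H. Qed.

Lemma gen_K zs : (forall z, z \in zs -> K z) -> forall q, gen R zs q -> K q.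
Proof. by move=> H; apply: span_ind_sub; [exact: K0|exact: K_add|exact: K_mul|exact: H]. Qed.

Lemma exists_min : noetherian R -> exists g, eqS (gen R g) m /\
  forall ys, eqS (gen R ys) m -> (size g <= size ys)%N.
Proof.
move=> Hn.
have mid : is_ideal R m.
  split; [by move=> z; apply: m_R|exact: m_0 HR|exact: m_add Hloc|exact: m_mul HR].
have [g0 Hg0] := Hn _ mid.
suff : forall n g, (size g <= n)%N -> eqS (gen R g) m -> exists g, eqS (gen R g) m /\
  forall ys, eqS (gen R ys) m -> (size g <= size ys)%N by move=> /(_ _ g0 (leqnn _) (fun q => iff_sym (Hg0 q))).
elim=> [|n IH] g Hs Hg.
  by exists g; split => // ys _; move: Hs; rewrite leqn0 => /eqP ->.
case: (classic (forall ys, eqS (gen R ys) m -> (size g <= size ys)%N)) => [H|H].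
  by exists g.
have [ys H1] := not_all_ex_not _ _ H; have [Hys nle] := imply_to_and _ _ H1.
apply: (IH ys) => //.
by rewrite -ltnS; apply: leq_trans Hs; rewrite ltnNge; apply/negP.
Qed.

Lemma dir21 (I : Q -> Prop) : subS I (colon K m) ->
  (forall (xs : seq Q) (r : nat),
      minimal_gens R m xs -> (r <= size xs)%N ->
      eqS K (sumS R (prodS R (gen R (take r xs)) (gen R (take r xs)))
                  (gen R (drop r xs))) ->
      ~ (exists x, I x /\ exists i j : nat,
            [/\ (i < r)%N, (j < r)%N & nth 0 xs j = x * nth 0 xs i])).
Proof.
move=> HI xs r [Hgen Hmin] hr HK [x [Ix [i [j [hi hj eij]]]]].
have mi : m (nth 0 xs i) by apply/Hgen/gen_mem/mem_nth/(leq_trans hi hr).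
have Kj : K (nth 0 xs j) by rewrite eij; apply: HI.
have Sj := proj1 (HK _) Kj.
set ys := take r xs in Sj; set zs := drop r xs in Sj.
have szy : size ys = r by rewrite size_takel.
have hj' : (j < size ys)%N by rewrite szy.
set t := nth 0 ys j.
have et : t = nth 0 xs j by rewrite /t nth_take.
set a := take j ys; set b := drop j.+1 ys.
have Eys : ys = a ++ t :: b by rewrite /a /b /t -drop_nth ?cat_take_drop.
have Exs : xs = (a ++ t :: b) ++ zs by rewrite -Eys cat_take_drop.
have gys_m : forall q, gen R ys q -> m q.
  move=> q gq; apply/Hgen; apply: gen_subl gq => z; rewrite /ys => /mem_take //.
pose S' := fun q => exists c u, [/\ m c, gen R (a ++ b ++ zs) u & q = c * t + u].
have S'0 : S' 0 by exists 0, 0; split; [exact: m_0 HR|exact: span_0|rewrite mul0r addr0].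
have S'D : forall p q, S' p -> S' q -> S' (p + q).
  move=> p q [c [u [mc gu ->]]] [c' [u' [mc' gu' ->]]].
  exists (c + c'), (u + u'); split; [exact: (m_add Hloc mc mc')|exact: span_add|ring].
have S'M : forall r0 p, R r0 -> S' p -> S' (r0 * p).
  move=> r0 p Rr [c [u [mc gu ->]]]; exists (r0 * c), (r0 * u).
  split; [exact: (m_mul HR Rr mc)|exact: span_mul|ring].
have HS : forall q, sumS R (prodS R (gen R ys) (gen R ys)) (gen R zs) q -> S' q.
  apply: (span_ind_sub S'0 S'D S'M).
  move=> q [Hp|Hz].
  - move: Hp; apply: (span_ind_sub S'0 S'D S'M).
    move=> x0 [p [q' [gp [gq' ex0]]]]; rewrite ex0.
    have mq' := gys_m _ gq'.
    move: gp; rewrite Eys => /(gen_split HR) [c [u [Rc gu ->]]].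
    exists (c * q'), (q' * u); split; [exact: (m_mul HR Rc mq')| |ring].
    apply: span_mul; first exact: m_R mq'.
    by apply: gen_subl gu => z; rewrite !mem_cat => /orP[->|->]; rewrite ?orbT.
  - exists 0, q; split; [exact: m_0 HR| |by rewrite mul0r add0r].
    by apply: gen_subl Hz => z; rewrite !mem_cat => ->; rewrite !orbT.
have [c [u [mc gu eu]]] := HS _ Sj.
rewrite -et in eu.
have gt : gen R (a ++ b ++ zs) t.
  have [d [Rd ->]] := unit_cancel t (one_sub_unit HR Hloc mc).
  have -> : (1 - c) * t = u by rewrite mulrBl mul1r {1}eu addrC addKr.
  exact: span_mul.
have Hg' : eqS (gen R (a ++ b ++ zs)) m.
  move=> q; split => gq.
  - apply/Hgen; rewrite Exs; apply: gen_subl gq => z.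
    by rewrite !mem_cat inE => /orP[->|/orP[->|->]]; rewrite ?orbT.
  - move/Hgen: gq; rewrite Exs; apply: gen_sub_gen => z.
    rewrite !mem_cat inE => /orP[/orP[za|/orP[/eqP ->|zb]]|zz] //;
      by apply: gen_mem; rewrite !mem_cat ?za ?zb ?zz ?orbT.
have := Hmin _ Hg'; rewrite {1}Exs !size_cat /=.
by rewrite addnS addSn addnA ltnn.
Qed.

Section NotGor.
Hypothesis HK1 : ~ K 1.

Lemma K_m k : K k -> m k.
Proof.
move=> Hk; case: (m_or_unit (K_R Hk)) => // [[d [Rd kd]]].
by exfalso; apply: HK1; rewrite -kd mulrC; apply: K_mul.
Qed.

Lemma BK x k : B x -> K k -> K (x * k).
Proof.
move=> Bx Hk w ow; rewrite -mulrA.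
have Rkw : R (k * w) := Hk w ow.
case: (m_or_unit Rkw) => [mkw|[u [Ru e]]]; first exact: B_R.
exfalso; apply: HK1.
have ow' : omega (w * u) by rewrite mulrC; apply: omega_mul.
have e' : k * (w * u) = 1 by rewrite mulrA.
have Rw' := intR_inv HR (K_R Hk) e' (Hoint ow').
by rewrite -e' mulrC; apply: K_mul.
Qed.


Lemma find_good x y0 : jacobson B x -> m y0 -> ~ K (x * y0) ->
  exists y, m y /\ forall a, R a -> ~ K (x * y - a * y).
Proof.
move=> Jx my0 nxy0.
have Bx : B x by case: Jx.
have Ry0 := m_R my0.
case: (classic (forall a, R a -> ~ K (x * y0 - a * y0))) => [G|]; first by exists y0.
move=> H0; have [lam H1] := not_all_ex_not _ _ H0; have [Rlam /NNPP Klam] := imply_to_and _ _ H1.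
have ulam : unit_in R lam.
  case: (m_or_unit Rlam) => // mlam; exfalso; apply: nxy0.
  have -> : x * y0 = (x * y0 - lam * y0) + lam * y0 by rewrite subrK.
  by apply: K_add => //; apply: mm_K.
have [u [Bu eu]] := unit_B Jx Rlam ulam.
have [z [mz nz]] : exists z, m z /\ ~ K (x * z - lam * z).
  apply: NNPP => H; apply: nxy0; apply: BK => //.
  have -> : y0 = x * (u * y0) - lam * (u * y0).
    by transitivity ((x - lam) * u * y0); [rewrite eu mul1r|ring].
  apply: NNPP => nK; apply: H; exists (u * y0); split => //; exact: Bu.
have Rz := m_R mz.
case: (classic (forall a, R a -> ~ K (x * z - a * z))) => [G|]; first by exists z.
move=> H2; have [mu H3] := not_all_ex_not _ _ H2; have [Rmu /NNPP Kmu] := imply_to_and _ _ H3.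
exists (y0 + z); split; first exact: (m_add Hloc).
move=> nu Rnu Kw.
have Ral : R (lam - nu) := RB HR Rlam Rnu.
have Rbe : R (mu - nu) := RB HR Rmu Rnu.
have K1 : K ((lam - nu) * y0 + (mu - nu) * z).
  have -> : (lam - nu) * y0 + (mu - nu) * z =
     (x * (y0 + z) - nu * (y0 + z)) - (x * y0 - lam * y0) - (x * z - mu * z) by ring.
  by apply: K_sub => //; apply: K_sub.
have umul : unit_in R (mu - lam).
  case: (m_or_unit (RB HR Rmu Rlam)) => // mml; exfalso; apply: nz.
  have -> : x * z - lam * z = (x * z - mu * z) + (mu - lam) * z by ring.
  by apply: K_add => //; apply: mm_K.
have K2 : K ((mu - nu) * ((mu - lam) * z)).
  have Bxl : B (x - lam) := B_sub Bx (R_B Rlam).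
  have H := BK Bxl K1.
  have -> : (mu - nu) * ((mu - lam) * z) = (x - lam) * ((lam - nu) * y0 + (mu - nu) * z)
     - (lam - nu) * (x * y0 - lam * y0) - (mu - nu) * (x * z - mu * z) by ring.
  by apply: K_sub; [apply: K_sub => //|]; apply: K_mul.
have mbe : m (mu - nu).
  case: (m_or_unit Rbe) => // [[d [Rd ed]]]; exfalso; apply: nz.
  have E : d * ((mu - nu) * ((mu - lam) * z)) = (mu - lam) * z.
    by rewrite mulrA (mulrC d) ed mul1r.
  have -> : x * z - lam * z = (x * z - mu * z) + d * ((mu - nu) * ((mu - lam) * z)).
    by rewrite E; ring.
  by apply: K_add => //; apply: K_mul.
have Kal : K ((lam - nu) * y0).
  have -> : (lam - nu) * y0 = ((lam - nu) * y0 + (mu - nu) * z) - (mu - nu) * z by rewrite addrK.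
  by apply: K_sub => //; apply: mm_K.
have mal : m (lam - nu).
  case: (m_or_unit Ral) => // [[d [Rd ed]]]; exfalso; apply: nxy0; apply: BK => //.
  have -> : y0 = d * ((lam - nu) * y0) by rewrite mulrA (mulrC d) ed mul1r.
  exact: K_mul.
apply: (m_unit (m_sub HR Hloc mbe mal)).
have -> : mu - nu - (lam - nu) = mu - lam by ring.
exact: umul.
Qed.


Lemma K_form ys zs ks : (forall q, gen R (ys ++ zs) q <-> m q) ->
  (forall z, z \in zs -> K z) -> eqS K (gen R ks) ->
  (forall k, k \in ks -> sumS R (gen R zs) (prodS R m m) k) ->
  eqS K (sumS R (prodS R (gen R ys) (gen R ys)) (gen R zs)).
Proof.
move=> Hgen HzK Hks HT.
pose S := sumS R (prodS R (gen R ys) (gen R ys)) (gen R zs).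
have S0 : S 0 by exact: span_0.
have SD : forall p q, S p -> S q -> S (p + q) by move=> p q; apply: span_add.
have SM : forall r p, R r -> S p -> S (r * p) by move=> r p; apply: span_mul.
have gys_m : forall q, gen R ys q -> m q.
  by move=> q gq; apply/Hgen; apply: gen_subl gq => z zy; rewrite mem_cat zy.
have gzs_K := gen_K HzK.
move=> q; split.
- move/Hks; apply (span_ind_sub S0 SD SM) => k /HT.
  apply (span_ind_sub S0 SD SM) => p [gp|pp].
    by apply: span_gen; right.
  move: pp; apply (span_ind_sub S0 SD SM) => p0 [a [b [ma [mb ->]]]].
  have [a1 [a2 [ga1 ga2 ea]]] := gen_cat (proj2 (Hgen a) ma).
  have [b1 [b2 [gb1 gb2 eb]]] := gen_cat (proj2 (Hgen b) mb).
  have -> : a * b = a1 * b1 + a1 * b2 + b * a2 by rewrite ea eb; ring.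
  apply SD; first apply SD.
  + by apply: span_gen; left; apply: span_gen; exists a1, b1.
  + by apply: span_gen; right; apply: span_mul => //; apply: m_R (gys_m _ ga1).
  + by apply: span_gen; right; apply: span_mul => //; apply: m_R mb.
- apply (span_ind_sub K0 K_add K_mul) => p [pp|gp]; last exact: gzs_K.
  move: pp; apply (span_ind_sub K0 K_add K_mul) => p0 [a [b [ga [gb ->]]]].
  by apply: mm_K; apply: gys_m.
Qed.

Lemma dir12 (I : Q -> Prop) : noetherian R -> subS I (jacobson B) ->
  (forall (xs : seq Q) (r : nat),
      minimal_gens R m xs -> (r <= size xs)%N ->
      eqS K (sumS R (prodS R (gen R (take r xs)) (gen R (take r xs)))
                  (gen R (drop r xs))) ->
      ~ (exists x, I x /\ exists i j : nat,
            [/\ (i < r)%N, (j < r)%N & nth 0 xs j = x * nth 0 xs i])) ->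
  subS I (colon K m).
Proof.
move=> Hn HIJ H1 x Ix b0 mb0; apply: NNPP => nK.
have Jx := HIJ x Ix.
have Bx : B x by case: Jx.
have [y [my Gy]] := find_good Jx mb0 nK.
have mxy : m (x * y) := Bx y my.
have nKy : ~ K y.
  move=> Ky; apply: (Gy 0 (R0 HR)); rewrite mul0r subr0; exact: BK.
have indep : forall a b, R a -> R b -> K (a * y + b * (x * y)) -> m a /\ m b.
  move=> a b Ra Rb Kab.
  have mb : m b.
    case: (m_or_unit Rb) => // [[d [Rd ed]]]; exfalso.
    apply: (Gy (- (d * a))); first by apply/(RN HR)/(RM HR).
    have -> : x * y - - (d * a) * y = d * (a * y + b * (x * y)).
      transitivity (d * a * y + (b * d) * (x * y)); first by rewrite ed mul1r; ring.
      ring.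
    exact: K_mul.
  split => //.
  case: (m_or_unit Ra) => // [[d [Rd ed]]]; exfalso; apply: nKy.
  have -> : y = d * ((a * y + b * (x * y)) - b * (x * y)).
    by rewrite addrK mulrA (mulrC d) ed mul1r.
  by apply: K_mul => //; apply: K_sub => //; apply: mm_K.
have [g [Hg Hmin]] := exists_min Hn.
have gm : forall l q, (forall q, gen R l q <-> m q) -> q \in l -> m q.
  by move=> l q Hl ql; apply/Hl/gen_mem.
have [[s1 [t [s2 [c [u [Eg [Rc uc] gu eu]]]]]]|[u [v [gu pv ev]]]] :=
  @split_exch [::] g y (gm g ^~ Hg) (proj2 (Hg y) my); last first.
  exfalso; apply: nKy; rewrite ev (gen_nil gu) add0r; exact: Hmm.
have Hg1 : forall q, gen R (y :: s1 ++ s2) q <-> m q.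
  by move=> q; rewrite (@exch_gen s1 s2 t c u y Rc uc gu eu) -Eg.
have [[s1' [t' [s2' [c' [u' [Eg' [Rc' uc'] gu' eu']]]]]]|[u2 [v2 [gu2 pv2 ev2]]]] :=
  @split_exch [:: y] (s1 ++ s2) (x * y)
     (fun q qs => gm _ q Hg1 (@mem_behead _ (y :: s1 ++ s2) q qs)) (proj2 (Hg1 _) mxy); last first.
  exfalso; have [c' [Rc' eu2]] := gen_single HR gu2.
  apply: (Gy c' Rc'); rewrite ev2 eu2 addrC addKr; exact: Hmm.
set rest0 := s1' ++ s2'.
have Hg2 : forall q, gen R (y :: x * y :: rest0) q <-> m q.
  move=> q; rewrite -(Hg1 q).
  have E : forall q, gen R (x * y :: (y :: s1') ++ s2') q <-> gen R (y :: s1 ++ s2) q.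
    by move=> q'; rewrite (@exch_gen (y :: s1') s2' t' c' u' (x * y) Rc' uc' gu' eu') /= Eg'.
  rewrite -E; apply: gen_mem_eq => z; rewrite /rest0 !inE !mem_cat.
  by case: (z == y); case: (z == x * y).
have szg : size g = (size rest0).+2.
  rewrite Eg size_cat /= addnS.
  have : size (s1 ++ s2) = size (s1' ++ t' :: s2') by rewrite Eg'.
  by rewrite /rest0 !size_cat /= addnS => ->.
have Kid : is_ideal R K by split; [exact: K_R|exact: K0|exact: K_add|exact: K_mul].
have [ks Hks] := Hn _ Kid.
have iter : forall ks0 : seq Q, (forall k, k \in ks0 -> K k) ->
   exists rest zs, [/\ (size rest + size zs)%N = size rest0,
     (forall q, gen R (y :: x * y :: rest ++ zs) q <-> m q),
     (forall z, z \in zs -> K z) &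
     (forall k, k \in ks0 -> sumS R (gen R zs) (prodS R m m) k)].
  elim=> [|k ks0 IH] Hks0.
    exists rest0, [::]; split => //; first by rewrite addn0.
    by move=> q; rewrite cats0.
  have [rest [zs [Hsz Hgen HzK HT]]] :
    exists rest zs, [/\ (size rest + size zs)%N = size rest0,
     (forall q, gen R (y :: x * y :: rest ++ zs) q <-> m q),
     (forall z, z \in zs -> K z) &
     (forall k, k \in ks0 -> sumS R (gen R zs) (prodS R m m) k)].
    by apply: IH => k' hk'; apply: Hks0; rewrite inE hk' orbT.
  have Kk : K k by apply: Hks0; rewrite inE eqxx.
  have Hmem : forall z, (z \in (y :: x * y :: zs) ++ rest) = (z \in y :: x * y :: rest ++ zs).
    move=> z; rewrite !inE !mem_cat.
    by case: (z == y); case: (z == x * y); case: (z \in zs); case: (z \in rest).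
  have Hs : forall z, z \in rest -> m z.
    by move=> z zr; apply: (gm _ z Hgen); rewrite !inE mem_cat zr !orbT.
  have Hk : gen R ((y :: x * y :: zs) ++ rest) k.
    by apply/(gen_mem_eq Hmem)/Hgen/K_m.
  have gzK := gen_K HzK.
  have Tmono : forall zs', {subset zs <= zs'} -> forall q,
      sumS R (gen R zs) (prodS R m m) q -> sumS R (gen R zs') (prodS R m m) q.
    move=> zs' sub; apply: span_mono => q [gq|pq]; last by right.
    by left; apply: gen_subl gq.
  case: (split_exch Hs Hk) =>
    [[r1 [tt [r2 [cc [uu [Er [Rcc ucc] guu euu]]]]]]|[uu [vv [guu pvv evv]]]].
  - exists (r1 ++ r2), (k :: zs); split.
    + by rewrite -Hsz Er !size_cat /=; lia.
    + move=> q; rewrite -Hgen.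
      have gu2 : gen R (((y :: x * y :: zs) ++ r1) ++ r2) uu by rewrite -catA.
      have E := exch_gen Rcc ucc gu2 euu q.
      transitivity (gen R (k :: ((y :: x * y :: zs) ++ r1) ++ r2) q).
        apply: gen_mem_eq => z; rewrite !inE !mem_cat !inE.
        by case: (z == y); case: (z == x * y); case: (z == k); case: (z \in zs);
           case: (z \in r1); case: (z \in r2).
      rewrite E; apply: gen_mem_eq => z; rewrite Er !inE !mem_cat !inE.
      by case: (z == y); case: (z == x * y); case: (z == tt); case: (z \in zs);
         case: (z \in r1); case: (z \in r2).
    + by move=> z; rewrite inE => /orP[/eqP ->|/HzK].
    + move=> k'; rewrite inE => /orP[/eqP ->|hk'].
        by apply: span_gen; left; apply: gen_mem; rewrite inE eqxx.
      by apply: Tmono (HT _ hk') => z zz; rewrite inE zz orbT.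
  - exists rest, zs; split => // k'; rewrite inE => /orP[/eqP ->|]; last exact: HT.
    have [a [u1 [Ra gu1 eu1]]] := proj1 (gen_split HR [::] (x * y :: zs) y uu) guu.
    have [b [u2 [Rb gu2 eu2]]] := proj1 (gen_split HR [::] zs (x * y) u1) gu1.
    have Kab : K (a * y + b * (x * y)).
      have -> : a * y + b * (x * y) = k - vv - u2 by rewrite evv eu1 eu2; ring.
      by apply: K_sub; [apply: K_sub => //; apply: Hmm|apply: gzK].
    have [ma mb] := indep a b Ra Rb Kab.
    have -> : k = u2 + (a * y + b * (x * y) + vv) by rewrite evv eu1 eu2; ring.
    apply: span_add; first by apply: span_gen; left.
    apply: span_gen; right; apply: span_add => //.
    by apply: span_add; apply: span_gen; [exists a, y|exists b, (x * y)].
have [rest [zs [Hsz Hgen HzK HT]]] := iter ks (fun k hk => proj2 (Hks k) (@gen_mem _ R _ _ hk)).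
apply: (H1 ((y :: x * y :: rest) ++ zs) (size (y :: x * y :: rest))).
- split; first exact: Hgen.
  move=> ys Hys; have := Hmin ys Hys.
  by rewrite szg -Hsz size_cat /= !addSn.
- by rewrite size_cat leq_addr.
- rewrite take_size_cat // drop_size_cat //.
  exact: (@K_form (y :: x * y :: rest) zs ks Hgen HzK Hks HT).
- exists x; split => //; exists 0%N, 1%N; split => //.
Qed.

End NotGor.
End Main.

Theorem lemma2p2 (Q : comUnitRingType) (R omega I : Q -> Prop) :
  is_subring R -> total_ring_of_fractions R -> noetherian R -> local R ->
  cm_dim_one R ->
  canonical_ideal R omega ->
  subS R omega -> subS omega (integral_closure R) ->
  subS (prodS R (nonunits R) (nonunits R)) (colon R omega) ->
  is_ideal (colon (nonunits R) (nonunits R)) I ->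
  subS I (jacobson (colon (nonunits R) (nonunits R))) ->
  ((forall (xs : seq Q) (r : nat),
      minimal_gens R (nonunits R) xs -> (r <= size xs)%N ->
      eqS (colon R omega)
          (sumS R (prodS R (gen R (take r xs)) (gen R (take r xs)))
                  (gen R (drop r xs))) ->
      ~ (exists x, I x /\ exists i j : nat,
            [/\ (i < r)%N, (j < r)%N & nth 0 xs j = x * nth 0 xs i]))
   <-> subS I (colon (colon R omega) (nonunits R))).
Proof.
move=> HR Htot Hn Hloc Hcm Hcan HRo Hoint Hmm HIid HIJ; split.
- move=> H1; case: (classic (colon R omega 1)) => HK1.
  + move=> x Ix b mb.
    have Bx : colon (nonunits R) (nonunits R) x by case: (HIJ x Ix).
    have Rxb := m_R (Bx b mb).
    by rewrite -[x * b]mulr1; apply: K_mul.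
  + by apply: (dir12 (omega := omega)).
- by move=> H2; apply: (dir21 (omega := omega)).
Qed.
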